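(* There is an equivalence of monoidal categories $\mathrm{Ext}(\mathrm{Aux}(\mathbf{Isometry}))\simeq\mathbf{CPTP}$.
   Context: $\mathbf{Isometry}$: objects finite-dimensional complex Hilbert spaces, morphisms isometric linear maps, monoidal structure the Hilbert space tensor product with unit $\mathbb C$, trivial restriction structure ($\overline f=\mathrm{id}$ for all $f$). $\mathbf{CPTP}$: objects finite-dimensional Hilbert spaces, morphisms $H\to K$ the completely positive trace-preserving linear maps $\mathcal B(H)\to\mathcal B(K)$, monoidal structure the tensor product. A restriction category is a category with an assignment $f\mapsto\overline f$ of endomorphisms satisfying $f\circ\overline f=f$, $\overline f\circ\overline g=\overline g\circ\overline f$, $\overline{g\circ\overline f}=\overline g\circ\overline f$, $\overline g\circ f=f\circ\overline{g\circ f}$. For a symmetric monoidal restriction category $\mathbf C$ (with $\overline{f\otimes g}=\overline f\otimes\overline g$), unit $I$, associator $\alpha$, right unitor $\rho$: for $f\colon A\to B\otimes E$, $f'\colon A\to B\otimes E'$ write $f\triangleright f'$ if $\overline f=\overline{f'}$ and $(\mathrm{id}_B\otimes h)\circ f=f'$ for some $h\colon E\to E'$; $\sim$ is the generated equivalence relation. $\mathrm{Aux}(\mathbf C)$ has the objects of $\mathbf C$, morphisms $A\to B$ the classes $[f,E]$ of $f\colon A\to B\otimes E$, composition $[g,E']\circ[f,E]=[\alpha\circ(g\otimes\mathrm{id})\circ f,E'\otimes E]$, identities $[\rho^{-1},I]$, tensor $[f,E]\otimes[f',E']=[\vartheta\circ(f\otimes f'),E\otimes E']$ with $\vartheta$ the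 canonical rearrangement isomorphism; its tensor unit is restriction terminal (every object has exactly one total morphism to it), so it is pointed by $I$. For a pointed restriction category, $f\approx g$ iff $f\circ a=g\circ a$ for all $a\colon I\to A$, and $\mathrm{Ext}(\mathbf C)=\mathbf C/{\approx}$, here with the monoidal structure induced from $\mathrm{Aux}(\mathbf{Isometry})$. *)

(* Defs.v *)
From HB Require Import structures.
From mathcomp Require Import all_boot all_order all_algebra.
From mathcomp Require Import complex mxtens Rstruct.
From Stdlib Require Import Relations.

Set Implicit Arguments.
Unset Strict Implicit.
Unset Printing Implicit Defensive.

Import GRing.Theory Num.Theory.
Local Open Scope ring_scope.

(* Part 1.  Monoidal categories (hom-sets given as subsets of carrier types, *)
(*          with a hom-wise equality "heq" of morphisms).                   *)

Record MonCat := {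
  ob : Type;
  hom : ob -> ob -> Type;
  valid : forall a b, hom a b -> Prop;
  heq : forall a b, hom a b -> hom a b -> Prop;
  idm : forall a, hom a a;
  comp : forall a b c, hom b c -> hom a b -> hom a c;  (* comp g f = g o f *)
  tob : ob -> ob -> ob;
  thom : forall a b a' b', hom a a' -> hom b b' -> hom (tob a b) (tob a' b');
  tunit : ob;
  assoc : forall a b c, hom (tob (tob a b) c) (tob a (tob b c));
  assoc_inv : forall a b c, hom (tob a (tob b c)) (tob (tob a b) c);
  lunit : forall a, hom (tob tunit a) a;
  lunit_inv : forall a, hom a (tob tunit a);
  runit : forall a, hom (tob a tunit) a;
  runit_inv : forall a, hom a (tob a tunit) }.

Arguments ob : clear implicits.
Arguments hom {M} a b : rename.
Arguments valid {M a b} f : rename.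
Arguments heq {M a b} f g : rename.
Arguments idm {M} a : rename.
Arguments comp {M a b c} g f : rename.
Arguments tob {M} a b : rename.
Arguments thom {M a b a' b'} f g : rename.
Arguments tunit {M} : rename.
Arguments assoc {M} a b c : rename.
Arguments assoc_inv {M} a b c : rename.
Arguments lunit {M} a : rename.
Arguments lunit_inv {M} a : rename.
Arguments runit {M} a : rename.
Arguments runit_inv {M} a : rename.

Definition inverse_pair (M : MonCat) (a b : ob M) (f : hom a b) (g : hom b a) :=
  [/\ valid f, valid g, heq (comp g f) (idm a) & heq (comp f g) (idm b)].

Record is_moncat (M : MonCat) : Prop := {
  heq_refl : forall a b (f : @hom M a b), valid f -> heq f f;
  heq_sym : forall a b (f g : @hom M a b), valid f -> valid g ->
    heq f g -> heq g f;
  heq_trans : forall a b (f g h : @hom M a b), valid f -> valid g -> valid h ->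
    heq f g -> heq g h -> heq f h;
  valid_idm : forall a : ob M, valid (idm a);
  valid_comp : forall (a b c : ob M) (g : hom b c) (f : hom a b),
    valid g -> valid f -> valid (comp g f);
  valid_thom : forall (a b a' b' : ob M) (f : hom a a') (g : hom b b'),
    valid f -> valid g -> valid (thom f g);
  comp_proper : forall (a b c : ob M) (g g' : hom b c) (f f' : hom a b),
    valid g -> valid g' -> valid f -> valid f' ->
    heq g g' -> heq f f' -> heq (comp g f) (comp g' f');
  thom_proper : forall (a b a' b' : ob M) (f f' : hom a a') (g g' : hom b b'),
    valid f -> valid f' -> valid g -> valid g' ->
    heq f f' -> heq g g' -> heq (thom f g) (thom f' g');
  comp_assoc : forall (a b c d : ob M) (h : hom c d) (g : hom b c) (f : hom a b),
    valid h -> valid g -> valid f ->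
    heq (comp h (comp g f)) (comp (comp h g) f);
  comp_idl : forall (a b : ob M) (f : hom a b), valid f -> heq (comp (idm b) f) f;
  comp_idr : forall (a b : ob M) (f : hom a b), valid f -> heq (comp f (idm a)) f;
  thom_id : forall a b : ob M, heq (thom (idm a) (idm b)) (idm (tob a b));
  thom_comp : forall (a b c a' b' c' : ob M) (f : hom a b) (g : hom b c)
      (f' : hom a' b') (g' : hom b' c'),
    valid f -> valid g -> valid f' -> valid g' ->
    heq (thom (comp g f) (comp g' f')) (comp (thom g g') (thom f f'));
  assoc_iso : forall a b c : ob M, inverse_pair (assoc a b c) (assoc_inv a b c);
  lunit_iso : forall a : ob M, inverse_pair (lunit a) (lunit_inv a);
  runit_iso : forall a : ob M, inverse_pair (runit a) (runit_inv a);
  assoc_nat : forall (a b c a' b' c' : ob M) (f : hom a a') (g : hom b b')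
      (h : hom c c'), valid f -> valid g -> valid h ->
    heq (comp (assoc a' b' c') (thom (thom f g) h))
        (comp (thom f (thom g h)) (assoc a b c));
  lunit_nat : forall (a b : ob M) (f : hom a b), valid f ->
    heq (comp (lunit b) (thom (idm tunit) f)) (comp f (lunit a));
  runit_nat : forall (a b : ob M) (f : hom a b), valid f ->
    heq (comp (runit b) (thom f (idm tunit))) (comp f (runit a));
  pentagon : forall a b c d : ob M,
    heq (comp (thom (idm a) (assoc b c d))
              (comp (assoc a (tob b c) d) (thom (assoc a b c) (idm d))))
        (comp (assoc a b (tob c d)) (assoc (tob a b) c d));
  triangle : forall a b : ob M,
    heq (comp (thom (idm a) (lunit b)) (assoc a tunit b))
        (thom (runit a) (idm b)) }.

Record MonFun (M N : MonCat) := {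
  fob : ob M -> ob N;
  fhom : forall a b : ob M, hom a b -> hom (fob a) (fob b);
  f0 : hom (@tunit N) (fob tunit);
  f0_inv : hom (fob tunit) (@tunit N);
  f2 : forall a b : ob M, hom (tob (fob a) (fob b)) (fob (tob a b));
  f2_inv : forall a b : ob M, hom (fob (tob a b)) (tob (fob a) (fob b)) }.

Arguments fob {M N} F a : rename.
Arguments fhom {M N} F {a b} f : rename.
Arguments f0 {M N} F : rename.
Arguments f0_inv {M N} F : rename.
Arguments f2 {M N} F a b : rename.
Arguments f2_inv {M N} F a b : rename.

Record is_strong_monoidal (M N : MonCat) (F : MonFun M N) : Prop := {
  fhom_valid : forall (a b : ob M) (f : hom a b), valid f -> valid (fhom F f);
  fhom_proper : forall (a b : ob M) (f g : hom a b), valid f -> valid g ->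
    heq f g -> heq (fhom F f) (fhom F g);
  fhom_id : forall a : ob M, heq (fhom F (idm a)) (idm (fob F a));
  fhom_comp : forall (a b c : ob M) (g : hom b c) (f : hom a b),
    valid g -> valid f -> heq (fhom F (comp g f)) (comp (fhom F g) (fhom F f));
  f0_iso : inverse_pair (f0 F) (f0_inv F);
  f2_iso : forall a b : ob M, inverse_pair (f2 F a b) (f2_inv F a b);
  f2_nat : forall (a b a' b' : ob M) (f : hom a a') (g : hom b b'),
    valid f -> valid g ->
    heq (comp (fhom F (thom f g)) (f2 F a b))
        (comp (f2 F a' b') (thom (fhom F f) (fhom F g)));
  f2_assoc : forall a b c : ob M,
    heq (comp (fhom F (assoc a b c))
              (comp (f2 F (tob a b) c) (thom (f2 F a b) (idm (fob F c)))))
        (comp (f2 F a (tob b c))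
              (comp (thom (idm (fob F a)) (f2 F b c))
                    (assoc (fob F a) (fob F b) (fob F c))));
  f2_lunit : forall a : ob M,
    heq (lunit (fob F a))
        (comp (fhom F (lunit a)) (comp (f2 F tunit a) (thom (f0 F) (idm (fob F a)))));
  f2_runit : forall a : ob M,
    heq (runit (fob F a))
        (comp (fhom F (runit a)) (comp (f2 F a tunit) (thom (idm (fob F a)) (f0 F)))) }.

Record is_equivalence (M N : MonCat) (F : MonFun M N) : Prop := {
  F_full : forall (a b : ob M) (g : hom (fob F a) (fob F b)), valid g ->
    exists2 f : hom a b, valid f & heq (fhom F f) g;
  F_faithful : forall (a b : ob M) (f g : hom a b), valid f -> valid g ->
    heq (fhom F f) (fhom F g) -> heq f g;
  F_esssurj : forall d : ob N, exists c : ob M,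
    exists (i : hom (fob F c) d) (j : hom d (fob F c)), inverse_pair i j }.

Definition monoidal_equivalence (M N : MonCat) (F : MonFun M N) : Prop :=
  is_strong_monoidal F /\ is_equivalence F.

(* Part 2.  Linear algebra over C.  The Hilbert space C^n is the object n.  *)
(* A linear map C^n -> C^m is a matrix 'M_(m, n); C^n (x) C^m = C^(n*m)     *)
(* via the Kronecker product *t.                                             *)

Notation C := (Rdefinitions.R[i]).

Definition adj m n (A : 'M[C]_(m, n)) : 'M[C]_(n, m) := (map_mx Num.conj A)^T.

Definition isometry m n (V : 'M[C]_(m, n)) : Prop := adj V *m V = 1%:M.

Definition pmx n m (f : 'I_n -> 'I_m) : 'M[C]_(m, n) :=
  \matrix_(r, s) ((r == f s)%:R).

(* canonical isomorphisms of the (skeletal) category Isometry *)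
Definition alpha_mx a b c : 'M[C]_(a * (b * c), (a * b) * c) :=
  pmx (cast_ord (esym (mulnA a b c))).
Definition alpha_inv_mx a b c : 'M[C]_((a * b) * c, a * (b * c)) :=
  pmx (cast_ord (mulnA a b c)).
Definition lambda_mx a : 'M[C]_(a, 1 * a) := pmx (cast_ord (mul1n a)).
Definition lambda_inv_mx a : 'M[C]_(1 * a, a) := pmx (cast_ord (esym (mul1n a))).
Definition rho_mx a : 'M[C]_(a, a * 1) := pmx (cast_ord (muln1 a)).
Definition rho_inv_mx a : 'M[C]_(a * 1, a) := pmx (cast_ord (esym (muln1 a))).

(* canonical rearrangement (B (x) E) (x) (B' (x) E') -> (B (x) B') (x) (E (x) E') *)
Definition theta_fun b e b' e' (s : 'I_((b * e) * (b' * e'))) :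
    'I_((b * b') * (e * e')) :=
  let xy := mxtens_unindex s in
  let ij := mxtens_unindex xy.1 in
  let kl := mxtens_unindex xy.2 in
  mxtens_index (mxtens_index (ij.1, kl.1), mxtens_index (ij.2, kl.2)).
Definition theta_mx b e b' e' : 'M[C]_((b * b') * (e * e'), (b * e) * (b' * e')) :=
  pmx (@theta_fun b e b' e').

(* A morphism n -> m of Aux is represented by f : n -> m (x) e, an isometry. *)

Record auxhom (n m : nat) := AuxHom {
  aux_e : nat;
  aux_V : 'M[C]_(m * aux_e, n) }.
Arguments AuxHom {n m} aux_e aux_V.

Definition aux_valid n m (f : auxhom n m) : Prop := isometry (aux_V f).

(* f |> g : (id_B (x) h) o f = g for some isometry h  (restriction is trivial) *)
Definition aux_pre n m (f g : auxhom n m) : Prop :=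
  aux_valid f /\ aux_valid g /\
  exists h : 'M[C]_(aux_e g, aux_e f),
    isometry h /\ (1%:M *t h) *m aux_V f = aux_V g.

Definition aux_sim n m : relation (auxhom n m) :=
  clos_refl_sym_trans (auxhom n m) (@aux_pre n m).

Definition aux_id n : auxhom n n := AuxHom 1 (rho_inv_mx n).

Definition aux_comp n m k (g : auxhom m k) (f : auxhom n m) : auxhom n k :=
  AuxHom (aux_e g * aux_e f)
    (alpha_mx k (aux_e g) (aux_e f) *m (aux_V g *t 1%:M) *m aux_V f).

Definition aux_tens n n' m m' (f : auxhom n m) (f' : auxhom n' m') :
    auxhom (n * n') (m * m') :=
  AuxHom (aux_e f * aux_e f')
    (theta_mx m (aux_e f) m' (aux_e f') *m (aux_V f *t aux_V f')).

Definition aux_emb n m (U : 'M[C]_(m, n)) : auxhom n m :=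
  AuxHom 1 (rho_inv_mx m *m U).

Definition ext_eq n m (f g : auxhom n m) : Prop :=
  forall a : auxhom 1 n, aux_valid a ->
    aux_sim (aux_comp f a) (aux_comp g a).

Definition ExtAuxIsometry : MonCat := {|
  ob := nat;
  hom := auxhom;
  valid := @aux_valid;
  heq := @ext_eq;
  idm := aux_id;
  comp := @aux_comp;
  tob := muln;
  thom := @aux_tens;
  tunit := 1%N;
  assoc := fun a b c => aux_emb (alpha_mx a b c);
  assoc_inv := fun a b c => aux_emb (alpha_inv_mx a b c);
  lunit := fun a => aux_emb (lambda_mx a);
  lunit_inv := fun a => aux_emb (lambda_inv_mx a);
  runit := fun a => aux_emb (rho_mx a);
  runit_inv := fun a => aux_emb (rho_inv_mx a) |}.

(* Part 4.  CPTP: objects n (the space C^n), morphisms n -> m the completely *)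
(* positive trace-preserving linear maps B(C^n) = 'M_n -> 'M_m = B(C^m).     *)

Definition psd n (P : 'M[C]_n) : Prop :=
  forall x : 'cV[C]_n, 0 <= (adj x *m P *m x) 0 0.

(* (id_{B(C^k)} (x) Phi) applied to P in B(C^k (x) C^n) *)
Definition ampl k n m (Phi : 'M[C]_n -> 'M[C]_m) (P : 'M[C]_(k * n)) :
    'M[C]_(k * m) :=
  \sum_(i < k) \sum_(j < k)
     (delta_mx i j *t Phi (\matrix_(a, b) P (mxtens_index (i, a))
                                            (mxtens_index (j, b)))).

Definition cptp n m (Phi : 'M[C]_n -> 'M[C]_m) : Prop :=
  [/\ (forall (c : C) (X Y : 'M[C]_n), Phi (c *: X + Y) = c *: Phi X + Phi Y),
      (forall X : 'M[C]_n, \tr (Phi X) = \tr X) &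
      (forall k (P : 'M[C]_(k * n)), psd P -> psd (@ampl k n m Phi P))].

(* tensor product of linear maps on matrix algebras, defined on matrix units *)
Definition cp_tens n n' m m' (Phi : 'M[C]_n -> 'M[C]_m) (Psi : 'M[C]_n' -> 'M[C]_m')
    (X : 'M[C]_(n * n')) : 'M[C]_(m * m') :=
  \sum_(i < n) \sum_(j < n) \sum_(k < n') \sum_(l < n')
     X (mxtens_index (i, k)) (mxtens_index (j, l)) *:
       (Phi (delta_mx i j) *t Psi (delta_mx k l)).

Definition conj_ch n m (U : 'M[C]_(m, n)) (X : 'M[C]_n) : 'M[C]_m :=
  U *m X *m adj U.

Definition CPTPcat : MonCat := {|
  ob := nat;
  hom := fun n m => 'M[C]_n -> 'M[C]_m;
  valid := @cptp;
  heq := fun n m Phi Psi => forall X, Phi X = Psi X;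
  idm := fun n X => X;
  comp := fun n m k Psi Phi X => Psi (Phi X);
  tob := muln;
  thom := @cp_tens;
  tunit := 1%N;
  assoc := fun a b c => conj_ch (alpha_mx a b c);
  assoc_inv := fun a b c => conj_ch (alpha_inv_mx a b c);
  lunit := fun a => conj_ch (lambda_mx a);
  lunit_inv := fun a => conj_ch (lambda_inv_mx a);
  runit := fun a => conj_ch (rho_mx a);
  runit_inv := fun a => conj_ch (rho_inv_mx a) |}.

(* Main.v *)
Require Import Defs.
From HB Require Import structures.
From mathcomp Require Import all_boot all_order all_algebra.
From mathcomp Require Import complex mxtens Rstruct.
From mathcomp Require spectral.
From mathcomp Require Import ring.
From Stdlib Require Import FunctionalExtensionality Relations.
Set Implicit Arguments.
Unset Strict Implicit.
Unset Printing Implicit Defensive.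
Import GRing.Theory Num.Theory Order.TTheory.
Local Open Scope ring_scope.
Local Notation isom := Defs.isometry.

Lemma adjE m n (A : 'M[C]_(m,n)) i j : adj A i j = (A j i)^*.
Proof. by rewrite /adj !mxE. Qed.

Lemma adj_mul m n p (A : 'M[C]_(m,n)) (B : 'M[C]_(n,p)) :
  adj (A *m B) = adj B *m adj A.
Proof. by rewrite /adj map_mxM trmx_mul. Qed.

Lemma adjK m n (A : 'M[C]_(m,n)) : adj (adj A) = A.
Proof. by apply/matrixP => i j; rewrite !adjE conjCK. Qed.

Lemma adjD m n (A B : 'M[C]_(m,n)) : adj (A + B) = adj A + adj B.
Proof. by apply/matrixP => i j; rewrite !mxE rmorphD. Qed.

Lemma adjZ m n (c : C) (A : 'M[C]_(m,n)) : adj (c *: A) = c^* *: adj A.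
Proof. by apply/matrixP => i j; rewrite !mxE rmorphM. Qed.

Lemma adj0 m n : adj (0 : 'M[C]_(m,n)) = 0.
Proof. by apply/matrixP => i j; rewrite !mxE rmorph0. Qed.

Lemma adj1 n : adj (1%:M : 'M[C]_n) = 1%:M.
Proof. by apply/matrixP => i j; rewrite !mxE eq_sym rmorph_nat. Qed.

Lemma adj_sum m n I (r : seq I) (P : pred I) (F : I -> 'M[C]_(m,n)) :
  adj (\sum_(i <- r | P i) F i) = \sum_(i <- r | P i) adj (F i).
Proof.
elim/big_rec2: _ => [|i y x _ IH]; first by rewrite adj0.
by rewrite adjD IH.
Qed.

Lemma adj_tens m n p q (A : 'M[C]_(m,n)) (B : 'M[C]_(p,q)) :
  adj (A *t B) = adj A *t adj B.
Proof. by apply/matrixP => i j; rewrite !mxE rmorphM. Qed.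

Lemma adj_delta m n (i : 'I_m) (j : 'I_n) : adj (delta_mx i j : 'M[C]_(m,n)) = delta_mx j i.
Proof. by apply/matrixP => a b; rewrite !mxE rmorph_nat andbC. Qed.

Lemma adj_pmx n m (f : 'I_n -> 'I_m) :
  adj (pmx f) = \matrix_(s, r) ((r == f s)%:R : C).
Proof. by apply/matrixP => a b; rewrite !mxE rmorph_nat. Qed.

Lemma mxtens_index_eq m n (x y : 'I_m * 'I_n) :
  (mxtens_index x == mxtens_index y) = (x == y).
Proof. exact: (inj_eq (can_inj (@mxtens_indexK _ _))). Qed.

Lemma tens1mx1 m n : (1%:M : 'M[C]_m) *t (1%:M : 'M[C]_n) = 1%:M.
Proof.
apply/matrixP => x y.
case: (mxtens_indexP x) => i j; case: (mxtens_indexP y) => k l.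
by rewrite tensmxE !mxE mxtens_index_eq xpair_eqE -natrM mulnb.
Qed.

Lemma tens_delta m n p q (i : 'I_m) (j : 'I_n) (k : 'I_p) (l : 'I_q) :
  (delta_mx i j : 'M[C]_(m,n)) *t (delta_mx k l : 'M[C]_(p,q))
  = delta_mx (mxtens_index (i, k)) (mxtens_index (j, l)).
Proof.
apply/matrixP => x y.
case: (mxtens_indexP x) => a b; case: (mxtens_indexP y) => c d.
rewrite tensmxE !mxE -natrM mulnb; congr (_%:R); congr nat_of_bool.
by rewrite !mxtens_index_eq !xpair_eqE andbACA.
Qed.

Lemma pmx_rmul k n m (X : 'M[C]_(k, m)) (f : 'I_n -> 'I_m) :
  X *m pmx f = \matrix_(x, s) X x (f s).
Proof.
apply/matrixP => x s; rewrite !mxE (bigD1 (f s)) //= big1 => [|y ne].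
  by rewrite !mxE eqxx mulr1 addr0.
by rewrite !mxE (negbTE ne) mulr0.
Qed.

Lemma adj_pmx_lmul k n m (X : 'M[C]_(m, k)) (f : 'I_n -> 'I_m) :
  adj (pmx f) *m X = \matrix_(s, y) X (f s) y.
Proof.
apply/matrixP => s y; rewrite !mxE (bigD1 (f s)) //= big1 => [|z ne].
  by rewrite !mxE eqxx rmorph1 mul1r addr0.
by rewrite !mxE (negbTE ne) rmorph0 mul0r.
Qed.

Lemma pmx_lmul k n m (X : 'M[C]_(n, k)) (f : 'I_n -> 'I_m) (g : 'I_m -> 'I_n) :
  cancel f g -> cancel g f ->
  pmx f *m X = \matrix_(r, y) X (g r) y.
Proof.
move=> fK gK; apply/matrixP => r y; rewrite !mxE (bigD1 (g r)) //= big1 => [|z ne].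
  by rewrite !mxE gK eqxx mul1r addr0.
rewrite !mxE; case: eqP => [E|]; last by rewrite mul0r.
by move: ne; rewrite E fK eqxx.
Qed.

Lemma isometry_pmx n m (f : 'I_n -> 'I_m) : injective f -> isom (pmx f).
Proof.
move=> inj; rewrite /Defs.isometry adj_pmx_lmul; apply/matrixP => a b.
by rewrite !mxE (inj_eq inj).
Qed.

Lemma pmx_cast n m (e : n = m) : pmx (cast_ord e) = castmx (e, erefl) (1%:M : 'M[C]_n).
Proof.
case: m / e; rewrite castmx_id; apply/matrixP => a b.
by rewrite !mxE cast_ord_id.
Qed.

Lemma conj_cast n m (e : n = m) (X : 'M[C]_n) :
  conj_ch (pmx (cast_ord e)) X = castmx (e, e) X.
Proof.
rewrite /conj_ch pmx_cast; case: m / e; rewrite !castmx_id.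
by rewrite mul1mx adj1 mulmx1.
Qed.

Lemma isometry_cast n m (e : n = m) : isom (pmx (cast_ord e) : 'M[C]_(m, n)).
Proof. by apply: isometry_pmx; exact: cast_ord_inj. Qed.

Lemma isometry_mul m n p (A : 'M[C]_(m, n)) (B : 'M[C]_(n, p)) :
  isom A -> isom B -> isom (A *m B).
Proof.
rewrite /Defs.isometry adj_mul => hA hB.
by rewrite mulmxA -(mulmxA (adj B)) hA mulmx1 hB.
Qed.

Lemma isometry_tens m n p q (A : 'M[C]_(m, n)) (B : 'M[C]_(p, q)) :
  isom A -> isom B -> isom (A *t B).
Proof.
by rewrite /Defs.isometry adj_tens tensmx_mul => -> ->; rewrite tens1mx1.
Qed.

Lemma isometry1 n : isom (1%:M : 'M[C]_n).
Proof. by rewrite /Defs.isometry adj1 mulmx1. Qed.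

Lemma sum_tens (V : nmodType) m n (F : 'I_(m * n) -> V) :
  \sum_(x < m * n) F x = \sum_(i < m) \sum_(j < n) F (mxtens_index (i, j)).
Proof.
rewrite pair_big /= (reindex (@mxtens_index m n)) /=.
  by apply: eq_bigr => -[i j].
exists (@mxtens_unindex m n) => x _; first by rewrite mxtens_indexK.
by rewrite mxtens_unindexK.
Qed.

Section TensLin.
Variables (m n p q : nat).
Implicit Types (A : 'M[C]_(m, n)) (B : 'M[C]_(p, q)).
Lemma tensmxDl A1 A2 B : (A1 + A2) *t B = A1 *t B + A2 *t B.
Proof. by apply/matrixP => i j; rewrite !mxE mulrDl. Qed.
Lemma tensmxDr A B1 B2 : A *t (B1 + B2) = A *t B1 + A *t B2.
Proof. by apply/matrixP => i j; rewrite !mxE mulrDr. Qed.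
Lemma tensmxZl c A B : (c *: A) *t B = c *: (A *t B).
Proof. by apply/matrixP => i j; rewrite !mxE mulrA. Qed.
Lemma tensmxZr c A B : A *t (c *: B) = c *: (A *t B).
Proof. by apply/matrixP => i j; rewrite !mxE mulrCA. Qed.
Lemma tensmx_suml I (r : seq I) (P : pred I) (F : I -> 'M[C]_(m, n)) B :
  (\sum_(i <- r | P i) F i) *t B = \sum_(i <- r | P i) (F i *t B).
Proof.
elim/big_rec2: _ => [|i y x _ IH]; first by rewrite tens0mx.
by rewrite tensmxDl IH.
Qed.
Lemma tensmx_sumr I (r : seq I) (P : pred I) A (F : I -> 'M[C]_(p, q)) :
  A *t (\sum_(i <- r | P i) F i) = \sum_(i <- r | P i) (A *t F i).
Proof.
elim/big_rec2: _ => [|i y x _ IH]; first by rewrite tensmx0.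
by rewrite tensmxDr IH.
Qed.
End TensLin.

Lemma castA_idx a b c (e : a * (b * c) = a * b * c) (i : 'I_a) (j : 'I_b) (k : 'I_c) :
  cast_ord e (mxtens_index (i, mxtens_index (j, k))) = mxtens_index (mxtens_index (i, j), k).
Proof. by apply: val_inj => /=; rewrite mulnDl -mulnA addnA. Qed.

Lemma castAV_idx a b c (e : a * b * c = a * (b * c)) (i : 'I_a) (j : 'I_b) (k : 'I_c) :
  cast_ord e (mxtens_index (mxtens_index (i, j), k)) = mxtens_index (i, mxtens_index (j, k)).
Proof. by apply: val_inj => /=; rewrite mulnDl -mulnA addnA. Qed.

Lemma cast1l_idx a (e : 1 * a = a) (i : 'I_1) (j : 'I_a) :
  cast_ord e (mxtens_index (i, j)) = j.
Proof. by apply: val_inj => /=; rewrite ord1 mul0n. Qed.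

Lemma cast1lV_idx a (e : a = 1 * a) (j : 'I_a) :
  cast_ord e j = mxtens_index (ord0, j).
Proof. by apply: val_inj => /=; rewrite mul0n. Qed.

Lemma cast1r_idx a (e : a * 1 = a) (i : 'I_a) (j : 'I_1) :
  cast_ord e (mxtens_index (i, j)) = i.
Proof. by apply: val_inj => /=; rewrite ord1 muln1 addn0. Qed.

Lemma cast1rV_idx a (e : a = a * 1) (j : 'I_a) :
  cast_ord e j = mxtens_index (j, ord0).
Proof. by apply: val_inj => /=; rewrite muln1 addn0. Qed.

Lemma tensA_cast a a' b b' c c' (A : 'M[C]_(a, a')) (B : 'M[C]_(b, b')) (D : 'M[C]_(c, c'))
  (e1 : a * (b * c) = a * b * c) (e2 : a' * (b' * c') = a' * b' * c') :
  castmx (esym e1, esym e2) ((A *t B) *t D) = A *t (B *t D).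
Proof.
apply/matrixP => x y; rewrite castmxE.
case: (mxtens_indexP x) => i x'; case: (mxtens_indexP x') => j k.
case: (mxtens_indexP y) => i' y'; case: (mxtens_indexP y') => j' k'.
by rewrite /= !castA_idx !tensmxE mulrA.
Qed.

Lemma tensAV_cast a a' b b' c c' (A : 'M[C]_(a, a')) (B : 'M[C]_(b, b')) (D : 'M[C]_(c, c'))
  (e1 : a * b * c = a * (b * c)) (e2 : a' * b' * c' = a' * (b' * c')) :
  castmx (esym e1, esym e2) (A *t (B *t D)) = (A *t B) *t D.
Proof.
apply/matrixP => x y; rewrite castmxE.
case: (mxtens_indexP x) => x' k; case: (mxtens_indexP x') => i j.
case: (mxtens_indexP y) => y' k'; case: (mxtens_indexP y') => i' j'.
by rewrite /= !castAV_idx !tensmxE mulrA.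
Qed.

Lemma conj_alpha_tens a b c (A : 'M[C]_a) (B : 'M[C]_b) (D : 'M[C]_c) :
  conj_ch (alpha_mx a b c) ((A *t B) *t D) = A *t (B *t D).
Proof. by rewrite /alpha_mx conj_cast tensA_cast. Qed.

Lemma conj_alphainv_tens a b c (A : 'M[C]_a) (B : 'M[C]_b) (D : 'M[C]_c) :
  conj_ch (alpha_inv_mx a b c) (A *t (B *t D)) = (A *t B) *t D.
Proof. by rewrite /alpha_inv_mx conj_cast -[mulnA a b c]esymK tensAV_cast. Qed.

Lemma conj_lambda_tens a (M : 'M[C]_1) (A : 'M[C]_a) :
  conj_ch (lambda_mx a) (M *t A) = M 0 0 *: A.
Proof.
rewrite /lambda_mx conj_cast; apply/matrixP => x y.
by rewrite castmxE /= !cast1lV_idx tensmxE mxE.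
Qed.

Lemma conj_lambdainv a (A : 'M[C]_a) :
  conj_ch (lambda_inv_mx a) A = (1%:M : 'M[C]_1) *t A.
Proof.
rewrite /lambda_inv_mx conj_cast; apply/matrixP => x y.
case: (mxtens_indexP x) => i x'; case: (mxtens_indexP y) => j y'.
by rewrite castmxE /= !cast1l_idx tensmxE !ord1 mxE mul1r.
Qed.

Lemma conj_rho_tens a (M : 'M[C]_1) (A : 'M[C]_a) :
  conj_ch (rho_mx a) (A *t M) = M 0 0 *: A.
Proof.
rewrite /rho_mx conj_cast; apply/matrixP => x y.
by rewrite castmxE /= !cast1rV_idx tensmxE mxE mulrC.
Qed.

Lemma conj_rhoinv a (A : 'M[C]_a) :
  conj_ch (rho_inv_mx a) A = A *t (1%:M : 'M[C]_1).
Proof.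
rewrite /rho_inv_mx conj_cast; apply/matrixP => x y.
case: (mxtens_indexP x) => x' i; case: (mxtens_indexP y) => y' j.
by rewrite castmxE /= !cast1r_idx tensmxE !ord1 mxE mulr1.
Qed.

Definition lin n m (Phi : 'M[C]_n -> 'M[C]_m) :=
  forall (c : C) X Y, Phi (c *: X + Y) = c *: Phi X + Phi Y.

Section Lin.
Variables (n m : nat) (Phi : 'M[C]_n -> 'M[C]_m).
Hypothesis hP : lin Phi.
Lemma lin0 : Phi 0 = 0.
Proof.
have h := hP 1 0 0; rewrite !scale1r addr0 in h.
by apply: (addrI (Phi 0)); rewrite addr0 -h.
Qed.
Lemma linD X Y : Phi (X + Y) = Phi X + Phi Y.
Proof. by move: (hP 1 X Y); rewrite !scale1r. Qed.
Lemma linZ c X : Phi (c *: X) = c *: Phi X.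
Proof. by rewrite -[c *: X]addr0 hP lin0 addr0. Qed.
Lemma lin_sum I (r : seq I) (P : pred I) (F : I -> 'M[C]_n) :
  Phi (\sum_(i <- r | P i) F i) = \sum_(i <- r | P i) Phi (F i).
Proof.
elim/big_rec2: _ => [|i y x _ IH]; first by rewrite lin0.
by rewrite linD IH.
Qed.
Lemma lin_decomp X : Phi X = \sum_i \sum_j X i j *: Phi (delta_mx i j).
Proof.
rewrite {1}(matrix_sum_delta X) lin_sum; apply: eq_bigr => i _.
by rewrite lin_sum; apply: eq_bigr => j _; rewrite linZ.
Qed.
End Lin.

Lemma lin_ext n m (Phi Psi : 'M[C]_n -> 'M[C]_m) : lin Phi -> lin Psi ->
  (forall i j, Phi (delta_mx i j) = Psi (delta_mx i j)) -> forall X, Phi X = Psi X.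
Proof.
move=> hP hQ E X; rewrite (lin_decomp hP) (lin_decomp hQ).
by apply: eq_bigr => i _; apply: eq_bigr => j _; rewrite E.
Qed.

Lemma lin_ext2 a b m (Phi Psi : 'M[C]_(a * b) -> 'M[C]_m) : lin Phi -> lin Psi ->
  (forall i j k l, Phi (delta_mx i j *t delta_mx k l) = Psi (delta_mx i j *t delta_mx k l)) ->
  forall X, Phi X = Psi X.
Proof.
move=> hP hQ E; apply: lin_ext => // x y.
case: (mxtens_indexP x) => i k; case: (mxtens_indexP y) => j l.
by rewrite -tens_delta E.
Qed.

Lemma lin_ext3 a b c m (Phi Psi : 'M[C]_(a * b * c) -> 'M[C]_m) : lin Phi -> lin Psi ->
  (forall i j k l p q, Phi ((delta_mx i j *t delta_mx k l) *t delta_mx p q)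
                     = Psi ((delta_mx i j *t delta_mx k l) *t delta_mx p q)) ->
  forall X, Phi X = Psi X.
Proof.
move=> hP hQ E; apply: lin_ext2 => // x y p q.
case: (mxtens_indexP x) => i k; case: (mxtens_indexP y) => j l.
by rewrite -tens_delta E.
Qed.

Lemma lin_ext4 a b c d m (Phi Psi : 'M[C]_(a * b * c * d) -> 'M[C]_m) : lin Phi -> lin Psi ->
  (forall i j k l p q u v,
      Phi (((delta_mx i j *t delta_mx k l) *t delta_mx p q) *t delta_mx u v)
    = Psi (((delta_mx i j *t delta_mx k l) *t delta_mx p q) *t delta_mx u v)) ->
  forall X, Phi X = Psi X.
Proof.
move=> hP hQ E; apply: lin_ext3 => // x y p q u v.
case: (mxtens_indexP x) => i k; case: (mxtens_indexP y) => j l.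
by rewrite -tens_delta E.
Qed.

Lemma lin_id n : lin (fun X : 'M[C]_n => X).
Proof. by []. Qed.

Lemma lin_comp n m k (Phi : 'M[C]_n -> 'M[C]_m) (Psi : 'M[C]_m -> 'M[C]_k) :
  lin Phi -> lin Psi -> lin (fun X => Psi (Phi X)).
Proof. by move=> h1 h2 c X Y; rewrite h1 h2. Qed.

Lemma lin_conj n m (U : 'M[C]_(m, n)) : lin (conj_ch U).
Proof.
by move=> c X Y; rewrite /conj_ch mulmxDr mulmxDl -scalemxAr -scalemxAl.
Qed.

Lemma lin_cp_tens n n' m m' (Phi : 'M[C]_n -> 'M[C]_m) (Psi : 'M[C]_n' -> 'M[C]_m') :
  lin (cp_tens Phi Psi).
Proof.
move=> c X Y; rewrite /cp_tens scaler_sumr -big_split; apply: eq_bigr => i _.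
rewrite scaler_sumr -big_split; apply: eq_bigr => j _.
rewrite scaler_sumr -big_split; apply: eq_bigr => k _.
rewrite scaler_sumr -big_split; apply: eq_bigr => l _.
by rewrite !mxE scalerDl scalerA.
Qed.

Lemma cp_tens_tens n n' m m' (Phi : 'M[C]_n -> 'M[C]_m) (Psi : 'M[C]_n' -> 'M[C]_m') A B :
  lin Phi -> lin Psi -> cp_tens Phi Psi (A *t B) = Phi A *t Psi B.
Proof.
move=> hP hQ; rewrite (lin_decomp hP A) (lin_decomp hQ B) /cp_tens tensmx_suml.
apply: eq_bigr => i _; rewrite tensmx_suml; apply: eq_bigr => j _.
rewrite tensmx_sumr; apply: eq_bigr => k _.
rewrite tensmx_sumr; apply: eq_bigr => l _.
by rewrite tensmxE tensmxZl tensmxZr scalerA.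
Qed.

Lemma cp_tens_id n n' (X : 'M[C]_(n * n')) :
  cp_tens (fun X : 'M[C]_n => X) (fun X : 'M[C]_n' => X) X = X.
Proof.
apply: (lin_ext2 (lin_cp_tens _ _) (@lin_id _)) => i j k l.
by rewrite cp_tens_tens.
Qed.

Definition ptr m e (Y : 'M[C]_(m * e)) : 'M[C]_m :=
  \matrix_(r, s) \sum_(k < e) Y (mxtens_index (r, k)) (mxtens_index (s, k)).

Definition chanV m e n (V : 'M[C]_(m * e, n)) (X : 'M[C]_n) : 'M[C]_m :=
  ptr (V *m X *m adj V).

Definition chan n m (f : auxhom n m) := chanV (aux_V f).

Definition Jk m e (k : 'I_e) : 'M[C]_(m * e, m) := pmx (fun s => mxtens_index (s, k)).

Lemma ptr_J m e (Y : 'M[C]_(m * e)) : ptr Y = \sum_k adj (Jk m k) *m Y *m Jk m k.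
Proof.
apply/matrixP => r s; rewrite !mxE summxE; apply: eq_bigr => k _.
by rewrite /Jk pmx_rmul adj_pmx_lmul !mxE.
Qed.

Definition Kr m e n (V : 'M[C]_(m * e, n)) (k : 'I_e) : 'M[C]_(m, n) := adj (Jk m k) *m V.

Lemma chanV_kraus m e n (V : 'M[C]_(m * e, n)) X :
  chanV V X = \sum_k Kr V k *m X *m adj (Kr V k).
Proof.
rewrite /chanV ptr_J; apply: eq_bigr => k _.
by rewrite /Kr adj_mul adjK !mulmxA.
Qed.

Lemma lin_ptr m e : lin (@ptr m e).
Proof.
move=> c X Y; apply/matrixP => r s; rewrite !mxE mulr_sumr -big_split.
by apply: eq_bigr => k _; rewrite !mxE.
Qed.

Lemma lin_chanV m e n (V : 'M[C]_(m * e, n)) : lin (chanV V).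
Proof.
have E Z : chanV V Z = ptr (conj_ch V Z) by [].
by move=> c X Y; rewrite !E lin_conj lin_ptr.
Qed.

Lemma lin_chan n m (f : auxhom n m) : lin (chan f).
Proof. exact: lin_chanV. Qed.

Lemma ptr_tens m e (A : 'M[C]_m) (B : 'M[C]_e) : ptr (A *t B) = \tr B *: A.
Proof.
apply/matrixP => r s; rewrite !mxE mulrC /mxtrace mulr_sumr; apply: eq_bigr => k _.
by rewrite tensmxE.
Qed.

Lemma tens1_Jk m m' e (B : 'M[C]_(m, m')) (k : 'I_e) :
  (B *t 1%:M) *m Jk m' k = Jk m k *m B.
Proof.
apply/matrixP => x s; rewrite /Jk pmx_rmul.
case: (mxtens_indexP x) => r l.
rewrite [in LHS]mxE tensmxE [in RHS]mxE (bigD1 r) //= big1 => [|t ne]; last first.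
  by rewrite !mxE mxtens_index_eq xpair_eqE eq_sym (negbTE ne) mul0r.
rewrite !mxE mxtens_index_eq xpair_eqE eqxx /= addr0.
by case: (l == k); rewrite ?mulr1 ?mul1r ?mulr0 ?mul0r.
Qed.

Lemma adjJk_tens1 m m' e (A : 'M[C]_(m', m)) (k : 'I_e) :
  adj (Jk m' k) *m (A *t 1%:M) = A *m adj (Jk m k).
Proof.
apply: (can_inj (@adjK _ _)); rewrite !adj_mul adj_tens adj1 !adjK.
exact: tens1_Jk.
Qed.

Lemma ptr_mul m m' e (A : 'M[C]_(m', m)) (Z : 'M[C]_(m * e)) (B : 'M[C]_(m, m')) :
  ptr ((A *t (1%:M : 'M_e)) *m Z *m (B *t 1%:M)) = A *m ptr Z *m B.
Proof.
rewrite !ptr_J mulmx_sumr mulmx_suml; apply: eq_bigr => k _.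
by rewrite -!mulmxA tens1_Jk !mulmxA adjJk_tens1.
Qed.

Lemma ptr_assoc a b c (Y : 'M[C]_(a * b * c)) :
  ptr (castmx (esym (mulnA a b c), esym (mulnA a b c)) Y) = ptr (ptr Y).
Proof.
apply/matrixP => r s; rewrite !mxE sum_tens; apply: eq_bigr => j _.
rewrite !mxE; apply: eq_bigr => k _.
by rewrite castmxE !castA_idx.
Qed.

Lemma adjJk_tens1h m e e' (h : 'M[C]_(e', e)) (k : 'I_e') :
  adj (Jk m k) *m ((1%:M : 'M_m) *t h) = \sum_l h k l *: adj (Jk m l).
Proof.
apply/matrixP => s y; rewrite /Jk adj_pmx_lmul !mxE summxE.
case: (mxtens_indexP y) => t l.
rewrite !mxtens_indexK /= (bigD1 l) //= big1 => [|l' ne].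
  rewrite adj_pmx !mxE mxtens_index_eq xpair_eqE eqxx andbT addr0.
  by rewrite mulrC eq_sym.
by rewrite adj_pmx !mxE mxtens_index_eq xpair_eqE [l == l']eq_sym (negbTE ne) andbF mulr0.
Qed.

Lemma conj_tens m n p q (U : 'M[C]_(m, n)) (W : 'M[C]_(p, q)) A B :
  conj_ch (U *t W) (A *t B) = conj_ch U A *t conj_ch W B.
Proof. by rewrite /conj_ch adj_tens !tensmx_mul. Qed.

Lemma ptr_iso m e e' (h : 'M[C]_(e', e)) (Z : 'M[C]_(m * e)) :
  isom h -> ptr (((1%:M : 'M_m) *t h) *m Z *m adj (1%:M *t h)) = ptr Z.
Proof.
move=> hh.
have := @lin_ext2 m e m (fun Z => ptr (conj_ch (1%:M *t h) Z)) (@ptr m e).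
apply => //; first exact: lin_comp (lin_conj _) (@lin_ptr _ _).
  exact: lin_ptr.
move=> i j k l; rewrite conj_tens !ptr_tens /conj_ch adj1 mulmx1 mul1mx.
by rewrite mxtrace_mulC mulmxA hh mul1mx.
Qed.

Lemma theta_idx b e b' e' (i : 'I_b) (j : 'I_e) (k : 'I_b') (l : 'I_e') :
  @theta_fun b e b' e' (mxtens_index (mxtens_index (i, j), mxtens_index (k, l)))
  = mxtens_index (mxtens_index (i, k), mxtens_index (j, l)).
Proof. by rewrite /theta_fun !mxtens_indexK. Qed.

Lemma thetaK b e b' e' : cancel (@theta_fun b e b' e') (@theta_fun b b' e e').
Proof.
move=> s; case: (mxtens_indexP s) => x y.
case: (mxtens_indexP x) => i j; case: (mxtens_indexP y) => k l.
by rewrite !theta_idx.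
Qed.

Lemma conj_pmx_bij n m (f : 'I_n -> 'I_m) (g : 'I_m -> 'I_n) (X : 'M[C]_n) :
  cancel f g -> cancel g f ->
  pmx f *m X *m adj (pmx f) = \matrix_(r, s) X (g r) (g s).
Proof.
move=> fK gK; rewrite (pmx_lmul _ fK gK).
rewrite -[X in X *m _]adjK -adj_mul (pmx_lmul _ fK gK).
by apply/matrixP => r s; rewrite !mxE conjCK.
Qed.

Lemma ptr_theta b e b' e' (Y : 'M[C]_(b * e)) (Y' : 'M[C]_(b' * e')) :
  ptr (theta_mx b e b' e' *m (Y *t Y') *m adj (theta_mx b e b' e')) = ptr Y *t ptr Y'.
Proof.
rewrite /theta_mx (conj_pmx_bij _ (@thetaK _ _ _ _) (@thetaK _ _ _ _)).
apply/matrixP => x y.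
case: (mxtens_indexP x) => i i'; case: (mxtens_indexP y) => j j'.
rewrite tensmxE [LHS]mxE sum_tens [ptr Y _ _]mxE [ptr Y' _ _]mxE mulr_suml.
apply: eq_bigr => k _; rewrite mulr_sumr; apply: eq_bigr => k' _.
by rewrite mxE !theta_idx tensmxE.
Qed.

Lemma chanVE m e n (V : 'M[C]_(m * e, n)) X : chanV V X = ptr (conj_ch V X).
Proof. by []. Qed.

Lemma chan_id n (X : 'M[C]_n) : chan (aux_id n) X = X.
Proof.
by rewrite /chan /= chanVE conj_rhoinv ptr_tens mxtrace1 scale1r.
Qed.

Lemma conj_mul m n p (A : 'M[C]_(m, n)) (B : 'M[C]_(n, p)) X :
  conj_ch (A *m B) X = conj_ch A (conj_ch B X).
Proof. by rewrite /conj_ch adj_mul !mulmxA. Qed.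

Lemma chan_emb n m (U : 'M[C]_(m, n)) X : chan (aux_emb U) X = conj_ch U X.
Proof.
by rewrite /chan /= chanVE conj_mul conj_rhoinv ptr_tens mxtrace1 scale1r.
Qed.

Lemma chan_comp n m k (g : auxhom m k) (f : auxhom n m) X :
  chan (aux_comp g f) X = chan g (chan f X).
Proof.
rewrite /chan /= !chanVE !conj_mul /alpha_mx conj_cast ptr_assoc.
by rewrite {1}/conj_ch adj_tens adj1 ptr_mul.
Qed.

Lemma chan_tens n n' m m' (f : auxhom n m) (f' : auxhom n' m') X :
  chan (aux_tens f f') X = cp_tens (chan f) (chan f') X.
Proof.
have := @lin_ext2 n n' _ (chan (aux_tens f f')) (cp_tens (chan f) (chan f')).
apply => //; [exact: lin_chan | exact: lin_cp_tens |].
move=> i j k l; rewrite cp_tens_tens; try exact: lin_chan.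
by rewrite /chan /= !chanVE conj_mul conj_tens ptr_theta.
Qed.

Lemma valid_aux_id n : aux_valid (aux_id n).
Proof. exact: isometry_cast. Qed.

Lemma valid_aux_emb n m (U : 'M[C]_(m, n)) : isom U -> aux_valid (aux_emb U).
Proof. by move=> hU; apply: isometry_mul => //; exact: isometry_cast. Qed.

Lemma valid_aux_comp n m k (g : auxhom m k) (f : auxhom n m) :
  aux_valid g -> aux_valid f -> aux_valid (aux_comp g f).
Proof.
move=> hg hf; rewrite /aux_valid /=; apply: isometry_mul => //.
apply: isometry_mul; first exact: isometry_cast.
by apply: isometry_tens => //; exact: isometry1.
Qed.

Lemma isometry_theta b e b' e' : isom (theta_mx b e b' e').
Proof. by apply: isometry_pmx; exact: can_inj (@thetaK _ _ _ _). Qed.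

Lemma valid_aux_tens n n' m m' (f : auxhom n m) (f' : auxhom n' m') :
  aux_valid f -> aux_valid f' -> aux_valid (aux_tens f f').
Proof.
move=> hf hf'; rewrite /aux_valid /=; apply: isometry_mul.
  exact: isometry_theta.
exact: isometry_tens.
Qed.

Lemma psd0 n : psd (0 : 'M[C]_n).
Proof. by move=> x; rewrite mulmx0 mul0mx mxE. Qed.

Lemma psdD n (P Q : 'M[C]_n) : psd P -> psd Q -> psd (P + Q).
Proof.
move=> hP hQ x; rewrite mulmxDr mulmxDl mxE.
exact: addr_ge0.
Qed.

Lemma psd_sum n I (r : seq I) (F : I -> 'M[C]_n) :
  (forall i, psd (F i)) -> psd (\sum_(i <- r) F i).
Proof.
move=> h; elim/big_ind: _ => //; [exact: psd0 | exact: psdD].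
Qed.

Lemma psd_conj n m (W : 'M[C]_(m, n)) (P : 'M[C]_n) :
  psd P -> psd (W *m P *m adj W).
Proof.
move=> hP x; have := hP (adj W *m x).
by rewrite adj_mul adjK !mulmxA.
Qed.

Lemma adj_vec_ge0 n (x : 'cV[C]_n) : 0 <= (adj x *m x) 0 0.
Proof.
rewrite mxE; apply: sumr_ge0 => i _; rewrite !mxE mulrC.
exact: mul_conjC_ge0.
Qed.

Lemma psd1 n : psd (1%:M : 'M[C]_n).
Proof. by move=> x; rewrite mulmx1; exact: adj_vec_ge0. Qed.

Lemma psd_gram m n (B : 'M[C]_(m, n)) : psd (B *m adj B).
Proof. by have := psd_conj B (@psd1 n); rewrite mulmx1. Qed.

Definition blk k n (P : 'M[C]_(k * n)) (i j : 'I_k) : 'M[C]_n :=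
  \matrix_(a, b) P (mxtens_index (i, a)) (mxtens_index (j, b)).

Lemma amplE k n m (Phi : 'M[C]_n -> 'M[C]_m) (P : 'M[C]_(k * n)) :
  ampl Phi P = \sum_i \sum_j delta_mx i j *t Phi (blk P i j).
Proof. by []. Qed.

Lemma block_decomp k n (P : 'M[C]_(k * n)) :
  P = \sum_i \sum_j delta_mx i j *t blk P i j.
Proof.
rewrite -{1}[P]cp_tens_id /cp_tens; apply: eq_bigr => i _; apply: eq_bigr => j _.
rewrite [blk P i j]matrix_sum_delta tensmx_sumr; apply: eq_bigr => a _.
rewrite tensmx_sumr; apply: eq_bigr => b _.
by rewrite tensmxZr mxE.
Qed.

Lemma ampl_conj k n m (K : 'M[C]_(m, n)) (P : 'M[C]_(k * n)) :
  ampl (conj_ch K) P = conj_ch ((1%:M : 'M_k) *t K) P.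
Proof.
rewrite {2}[P]block_decomp amplE (lin_sum (lin_conj _)).
apply: eq_bigr => i _; rewrite (lin_sum (lin_conj _)); apply: eq_bigr => j _.
by rewrite conj_tens /conj_ch adj1 mulmx1 mul1mx.
Qed.

Lemma ampl_sum k n m I (r : seq I) (F : I -> 'M[C]_n -> 'M[C]_m) (P : 'M[C]_(k * n)) :
  ampl (fun X => \sum_(c <- r) F c X) P = \sum_(c <- r) ampl (F c) P.
Proof.
rewrite amplE; under eq_bigr do under eq_bigr do rewrite tensmx_sumr.
under eq_bigr do rewrite exchange_big /=.
by rewrite exchange_big.
Qed.

Lemma cptp_ext n m (Phi Psi : 'M[C]_n -> 'M[C]_m) :
  (forall X, Phi X = Psi X) -> cptp Psi -> cptp Phi.
Proof. by move=> E; have -> : Phi = Psi by apply: functional_extensionality. Qed.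

Lemma tr_ptr m e (Y : 'M[C]_(m * e)) : \tr (ptr Y) = \tr Y.
Proof.
rewrite /mxtrace sum_tens; apply: eq_bigr => r _; rewrite mxE.
by apply: eq_bigr.
Qed.

Lemma cptp_chanV m e n (V : 'M[C]_(m * e, n)) : isom V -> cptp (chanV V).
Proof.
move=> hV; split; first exact: lin_chanV.
  by move=> X; rewrite chanVE tr_ptr /conj_ch mxtrace_mulC mulmxA hV mul1mx.
move=> k P hP.
have -> : ampl (chanV V) P = \sum_c ampl (conj_ch (Kr V c)) P.
  rewrite -ampl_sum; congr (ampl _ P); apply: functional_extensionality => X.
  exact: chanV_kraus.
apply: psd_sum => c; rewrite ampl_conj; exact: psd_conj.
Qed.

Lemma cptp_chan n m (f : auxhom n m) : aux_valid f -> cptp (chan f).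
Proof. exact: cptp_chanV. Qed.

Definition ev n (a : 'I_n) : 'cV[C]_n := delta_mx a 0.

Lemma form_ev n (P : 'M[C]_n) a b : (adj (ev a) *m P *m ev b) 0 0 = P a b.
Proof. by rewrite /ev adj_delta -rowE -colE !mxE. Qed.

Lemma form_expand n (P : 'M[C]_n) (u v : 'cV[C]_n) (c : C) :
  (adj (u + c *: v) *m P *m (u + c *: v)) 0 0 =
  (adj u *m P *m u) 0 0 + c * (adj u *m P *m v) 0 0
  + c^* * (adj v *m P *m u) 0 0 + c^* * c * (adj v *m P *m v) 0 0.
Proof.
rewrite adjD adjZ !mulmxDl !mulmxDr -!scalemxAl -!scalemxAr !mxE.
ring.
Qed.

Lemma psd_real n (P : 'M[C]_n) (x : 'cV[C]_n) : psd P -> ((adj x *m P *m x) 0 0)^* = (adj x *m P *m x) 0 0.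
Proof. by move=> hP; apply: conj_Creal; apply: ger0_real. Qed.

Lemma psd_herm n (P : 'M[C]_n) : psd P -> adj P = P.
Proof.
move=> hP; apply/matrixP => a b; rewrite adjE.
have ra := psd_real (ev a) hP; have rb := psd_real (ev b) hP.
rewrite !form_ev in ra rb.
set p := P a b; set q := P b a.
have c1 : P a a + p^* + q^* + P b b = P a a + p + q + P b b.
  have := @psd_real n P (ev a + 1 *: ev b) hP.
  rewrite form_expand !form_ev rmorph1 !mul1r.
  by rewrite !rmorphD /= ra rb.
have ii : 'i * 'i = -1 :> C by rewrite -expr2 sqrCi.
have c2 : P a a - 'i * p^* + 'i * q^* + P b b = P a a + 'i * p - 'i * q + P b b.
  have := @psd_real n P (ev a + 'i *: ev b) hP.
  rewrite form_expand !form_ev conjCi !mulNr ii mulN1r opprK.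
  by rewrite !rmorphD !rmorphN !rmorphM /= conjCi ra rb !mulNr opprK.
have E : 2 * (p^* - q) = (P a a + p^* + q^* + P b b - (P a a + p + q + P b b))
   + 'i * (P a a - 'i * p^* + 'i * q^* + P b b - (P a a + 'i * p - 'i * q + P b b))
   + (1 + 'i * 'i) * (p^* - q^* + p - q) by ring.
rewrite c1 c2 !subrr mulr0 !add0r ii subrr mul0r in E.
move/eqP: E; rewrite mulf_eq0 pnatr_eq0 /= subr_eq0 => /eqP E.
by rewrite -E conjCK.
Qed.

Lemma adj_diag n (d : 'rV[C]_n) : adj (diag_mx d) = diag_mx (\row_i (d 0 i)^*).
Proof.
apply/matrixP => i j; rewrite adjE !mxE; have [->|ne] := eqVneq i j.
  by rewrite !mulr1n.
by rewrite !mulr0n ?rmorph0.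
Qed.

Lemma adj_tc m n (A : 'M[C]_(m, n)) : adj A = map_mx Num.conj (A^T).
Proof. by rewrite /adj map_trmx. Qed.

Lemma spectral_herm n (P : 'M[C]_n) : adj P = P ->
  exists (Q : 'M[C]_n) (d : 'rV[C]_n),
    [/\ Q *m adj Q = 1%:M, adj Q *m Q = 1%:M & P = adj Q *m diag_mx d *m Q].
Proof.
move=> hP.
have hn : P \is spectral.normalmx.
  by apply/spectral.normalmxP; rewrite -adj_tc hP.
move/spectral.orthomx_spectralP: hn => E.
have hu := spectral.spectral_unitarymx P.
have inv := spectral.invmx_unitary hu.
have u1 : spectral.spectralmx P *m adj (spectral.spectralmx P) = 1%:M.
  by rewrite adj_tc; apply/spectral.unitarymxP.
exists (spectral.spectralmx P), (spectral.spectral_diag P); split => //.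
  exact: mulmx1C.
by rewrite {1}E inv -adj_tc.
Qed.

Lemma spectral_psd n (P : 'M[C]_n) : psd P ->
  exists (Q : 'M[C]_n) (d : 'rV[C]_n),
    [/\ Q *m adj Q = 1%:M, adj Q *m Q = 1%:M, P = adj Q *m diag_mx d *m Q
      & forall i, 0 <= d 0 i].
Proof.
move=> hP; have [Q [d [u1 u2 E]]] := spectral_herm (psd_herm hP).
exists Q, d; split => // i.
have -> : d 0 i = (Q *m P *m adj Q) i i.
  rewrite E !mulmxA u1 mul1mx -mulmxA u1 mulmx1 mxE eqxx mulr1n //.
have h := hP (adj Q *m ev i); rewrite adj_mul adjK in h.
by rewrite -form_ev; rewrite !mulmxA in h *.
Qed.

Lemma psd_factor n (P : 'M[C]_n) : psd P -> exists K : 'M[C]_n, P = K *m adj K.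
Proof.
move=> hP; have [Q [d [u1 u2 E hd]]] := spectral_psd hP.
pose s : 'rV[C]_n := \row_i sqrtC (d 0 i).
exists (adj Q *m diag_mx s).
rewrite adj_mul adjK adj_diag -!mulmxA [diag_mx s *m _]mulmxA mulmx_diag E !mulmxA.
congr (_ *m _); congr (_ *m _); congr diag_mx; apply/rowP => i; rewrite !mxE.
have hr : (sqrtC (d 0 i))^* = sqrtC (d 0 i).
  by apply: conj_Creal; apply: ger0_real; rewrite sqrtC_ge0.
by rewrite hr -expr2 sqrtCK.
Qed.

Definition choi n m (Phi : 'M[C]_n -> 'M[C]_m) : 'M[C]_(n * m) :=
  \sum_i \sum_j delta_mx i j *t Phi (delta_mx i j).

Definition omega_vec n : 'cV[C]_(n * n) :=
  \matrix_(x, _) (((mxtens_unindex x).1 == (mxtens_unindex x).2)%:R).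

Lemma choi_ampl n m (Phi : 'M[C]_n -> 'M[C]_m) :
  choi Phi = ampl Phi (omega_vec n *m adj (omega_vec n)).
Proof.
rewrite amplE /choi; apply: eq_bigr => i _; apply: eq_bigr => j _.
congr (_ *t Phi _); apply/matrixP => a b.
rewrite !mxE big_ord1 !mxE !mxtens_indexK /= rmorph_nat -natrM mulnb.
by rewrite [a == i]eq_sym [b == j]eq_sym.
Qed.

Lemma choi_psd n m (Phi : 'M[C]_n -> 'M[C]_m) : cptp Phi -> psd (choi Phi).
Proof. by case=> _ _ cp; rewrite choi_ampl; apply: cp; exact: psd_gram. Qed.

Lemma sum_delta_tens n m (F : 'I_n -> 'I_n -> 'M[C]_m) s r s' r' :
  (\sum_i \sum_j delta_mx i j *t F i j) (mxtens_index (s, r)) (mxtens_index (s', r'))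
  = F s s' r r'.
Proof.
transitivity (\sum_i \sum_j ((i == s) && (j == s'))%:R * F i j r r').
  rewrite summxE; apply: eq_bigr => i _; rewrite summxE; apply: eq_bigr => j _.
  by rewrite tensmxE mxE [s == i]eq_sym [s' == j]eq_sym.
rewrite (bigD1 s) //= (bigD1 s') //= !eqxx /= mul1r big1 ?addr0; last first.
  by move=> j /negbTE ->; rewrite mul0r.
by rewrite big1 ?addr0 // => i /negbTE ne; rewrite big1 // => j _; rewrite ne mul0r.
Qed.

Lemma choi_entry n m (Phi : 'M[C]_n -> 'M[C]_m) s r s' r' :
  choi Phi (mxtens_index (s, r)) (mxtens_index (s', r')) = Phi (delta_mx s s') r r'.
Proof. exact: sum_delta_tens. Qed.

Lemma tr_delta n (i j : 'I_n) : \tr (delta_mx i j : 'M[C]_n) = (i == j)%:R.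
Proof.
rewrite /mxtrace (bigD1 i) //= big1 => [|k ne]; last by rewrite mxE (negbTE ne).
by rewrite mxE eqxx addr0.
Qed.

Lemma stinespring n m (Phi : 'M[C]_n -> 'M[C]_m) : cptp Phi ->
  exists f : auxhom n m, aux_valid f /\ forall X, chan f X = Phi X.
Proof.
move=> hc; have [hl htr _] := hc.
have [K EK] := psd_factor (choi_psd hc).
pose V : 'M[C]_(m * (n * m), n) :=
  \matrix_(x, s) K (mxtens_index (s, (mxtens_unindex x).1)) (mxtens_unindex x).2.
have VE r k s : V (mxtens_index (r, k)) s = K (mxtens_index (s, r)) k.
  by rewrite mxE mxtens_indexK.
clearbody V.
have JE s r s' r' : Phi (delta_mx s s') r r' =
    \sum_k K (mxtens_index (s, r)) k * (K (mxtens_index (s', r')) k)^*.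
  by rewrite -choi_entry EK mxE; apply: eq_bigr => k _; rewrite adjE.
exists (AuxHom _ V); split.
  rewrite /aux_valid /= /Defs.isometry; apply/matrixP => s s'.
  rewrite !mxE sum_tens eq_sym -tr_delta -htr.
  rewrite /mxtrace; apply: eq_bigr => r _; rewrite JE.
  by apply: eq_bigr => k _; rewrite adjE !VE mulrC.
move=> X; rewrite /chan /= (lin_decomp hl X); apply/matrixP => r r'.
rewrite !mxE !summxE.
under [RHS]eq_bigr do rewrite summxE.
under [RHS]eq_bigr do under eq_bigr do rewrite mxE JE mulr_sumr.
under [RHS]eq_bigr do rewrite exchange_big /=.
rewrite [RHS]exchange_big /=; apply: eq_bigr => k _.
rewrite mxE.
under [LHS]eq_bigr => t _ do rewrite mxE mulr_suml.
rewrite exchange_big /=; apply: eq_bigr => s _; apply: eq_bigr => t _.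
by rewrite adjE !VE; ring.
Qed.

Lemma adj_row m n1 n2 (X : 'M[C]_(m, n1)) (Y : 'M[C]_(m, n2)) :
  adj (row_mx X Y) = col_mx (adj X) (adj Y).
Proof. by rewrite /adj map_row_mx tr_row_mx. Qed.

Lemma adjB m n (X Y : 'M[C]_(m, n)) : adj (X - Y) = adj X - adj Y.
Proof. by apply/matrixP => i j; rewrite !mxE rmorphB. Qed.

Lemma diag_kill m k (d : 'rV[C]_m) (M : 'M[C]_(m, k)) :
  M *m adj M = diag_mx d ->
  diag_mx (\row_i ((d 0 i != 0)%:R)) *m M = M.
Proof.
move=> E; rewrite mul_diag_mx; apply/matrixP => i j; rewrite !mxE.
have [d0|] := eqP; last by rewrite mul1r.
rewrite mul0r; apply/esym/eqP; rewrite -mul_conjC_eq0; apply/eqP.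
have : (M *m adj M) i i = 0 by rewrite E mxE eqxx mulr1n d0.
rewrite mxE => hs.
have := @psumr_eq0P _ _ xpredT (fun l => M i l * adj M l i).
move=> /(_ _ hs j isT); rewrite adjE; apply => l _.
by rewrite adjE; exact: mul_conjC_ge0.
Qed.

Lemma purif_mx m e e' (A : 'M[C]_(m, e)) (B : 'M[C]_(m, e')) :
  A *m adj A = B *m adj B ->
  exists h : 'M[C]_(e, e' + e), h *m adj h = 1%:M /\ A *m h = row_mx B 0.
Proof.
move=> EAB.
have [Q [d [u1 u2 E hd]]] := spectral_psd (psd_gram A).
have [A1 [DA hA]] : exists A1 : 'M[C]_(m, e), A1 *m adj A1 = diag_mx d /\ A = adj Q *m A1.
  exists (Q *m A); split; last by rewrite mulmxA u2 mul1mx.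
  by rewrite adj_mul !mulmxA -(mulmxA Q) E !mulmxA u1 mul1mx -mulmxA u1 mulmx1.
have [B1 [DB hB]] : exists B1 : 'M[C]_(m, e'), B1 *m adj B1 = diag_mx d /\ B = adj Q *m B1.
  exists (Q *m B); split; last by rewrite mulmxA u2 mul1mx.
  by rewrite adj_mul !mulmxA -(mulmxA Q) -EAB E !mulmxA u1 mul1mx -mulmxA u1 mulmx1.
have dr i : (d 0 i)^* = d 0 i by apply: conj_Creal; apply: ger0_real.
pose Dinv := diag_mx (\row_i (d 0 i)^-1).
pose Pi := diag_mx (\row_i ((d 0 i != 0)%:R : C)).
have DDinv : diag_mx d *m Dinv = Pi.
  rewrite mulmx_diag; congr diag_mx; apply/rowP => i; rewrite !mxE.
  have [->|nz] := eqVneq (d 0 i) 0; first by rewrite mul0r.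
  by rewrite mulfV // nz.
have DinvD : Dinv *m diag_mx d *m Dinv = Dinv.
  rewrite !mulmx_diag; congr diag_mx; apply/rowP => i; rewrite !mxE.
  have [->|nz] := eqVneq (d 0 i) 0; first by rewrite invr0 !mulr0.
  by rewrite mulVf // mul1r.
have aDinv : adj Dinv = Dinv.
  by rewrite adj_diag; congr diag_mx; apply/rowP => i; rewrite !mxE fmorphV /= dr.
have PA : Pi *m A1 = A1 by apply: diag_kill DA.
have PB : Pi *m B1 = B1 by apply: diag_kill DB.
pose h := adj A1 *m Dinv *m B1.
pose P := adj A1 *m Dinv *m A1.
have Ah : A *m h = B.
  rewrite /h hA !mulmxA -(mulmxA _ A1) DA -(mulmxA _ (diag_mx d)) DDinv.
  by rewrite -mulmxA PB -hB.
have AP : A *m P = A.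
  rewrite /P {1}hA !mulmxA -(mulmxA _ A1) DA -(mulmxA _ (diag_mx d)) DDinv.
  by rewrite -mulmxA PA -hA.
have aP : adj P = P by rewrite /P !adj_mul adjK aDinv mulmxA.
have PP : P *m P = P.
  rewrite /P !mulmxA -(mulmxA _ A1 (adj A1)) DA -!mulmxA.
  by rewrite [Dinv *m (diag_mx d *m _)]mulmxA [Dinv *m _ *m _]mulmxA DinvD.
have hh : h *m adj h = P.
  rewrite /h /P !adj_mul adjK aDinv !mulmxA -(mulmxA _ B1) DB -!mulmxA.
  by rewrite [Dinv *m (diag_mx d *m _)]mulmxA [Dinv *m _ *m _]mulmxA DinvD.
exists (row_mx h (1%:M - P)); split.
  rewrite adj_row mul_row_col hh adjB adj1 aP mulmxBl mul1mx mulmxBr mulmx1 PP.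
  by rewrite subrr subr0 addrC subrK.
by rewrite mul_mx_row Ah mulmxBr mulmx1 AP subrr.
Qed.

Definition unvec m e (V : 'M[C]_(m * e, 1)) : 'M[C]_(m, e) :=
  \matrix_(r, k) V (mxtens_index (r, k)) 0.

Lemma unvec_inj m e : injective (@unvec m e).
Proof.
move=> V W E; apply/matrixP => x j; rewrite [j]ord1.
case: (mxtens_indexP x) => r k.
by have := congr1 (fun M : 'M[C]_(m, e) => M r k) E; rewrite !mxE.
Qed.

Lemma unvec_mul m e e' (h : 'M[C]_(e', e)) (V : 'M[C]_(m * e, 1)) :
  unvec (((1%:M : 'M_m) *t h) *m V) = unvec V *m h^T.
Proof.
apply/matrixP => r k'; rewrite !mxE sum_tens (bigD1 r) //= [X in _ + X]big1 => [|t ne]; last first.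
  by rewrite big1 // => l _; rewrite tensmxE mxE eq_sym (negbTE ne) !mul0r.
rewrite addr0; apply: eq_bigr => l _.
by rewrite tensmxE !mxE eqxx mul1r mulrC.
Qed.

Lemma chan_state m (s : auxhom 1 m) :
  chan s 1%:M = unvec (aux_V s) *m adj (unvec (aux_V s)).
Proof.
rewrite /chan chanVE /conj_ch mulmx1; apply/matrixP => r r'.
rewrite !mxE; apply: eq_bigr => k _.
by rewrite mxE big_ord1 !adjE !mxE.
Qed.

Lemma pre_chan n m (f g : auxhom n m) : aux_pre f g -> forall X, chan f X = chan g X.
Proof.
move=> [_ [_ [h [hh E]]]] X; rewrite /chan -E !chanVE conj_mul.
by rewrite /conj_ch ptr_iso.
Qed.

Lemma sim_chan n m (f g : auxhom n m) : aux_sim f g -> forall X, chan f X = chan g X.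
Proof.
elim => [x y /pre_chan //|x X //|x y _ IH X|x y z _ IH1 _ IH2 X].
  by rewrite IH.
by rewrite IH1 IH2.
Qed.

Lemma adj_col m1 m2 n (X : 'M[C]_(m1, n)) (Y : 'M[C]_(m2, n)) :
  adj (col_mx X Y) = row_mx (adj X) (adj Y).
Proof. by rewrite /adj map_col_mx tr_col_mx. Qed.

Lemma purif_state m (s t : auxhom 1 m) : aux_valid s -> aux_valid t ->
  chan s 1%:M = chan t 1%:M -> aux_sim s t.
Proof.
move=> vs vt; rewrite !chan_state => E.
have [h [hh Eh]] := purif_mx E.
pose g2 : 'M[C]_(aux_e t + aux_e s, aux_e t) := col_mx 1%:M 0.
have g2i : isom g2.
  by rewrite /Defs.isometry /g2 adj_col mul_row_col adj1 adj0 mulmx1 mulmx0 addr0.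
pose W := AuxHom (aux_e t + aux_e s) ((1%:M *t g2) *m aux_V t).
have vW : aux_valid W.
  by apply: isometry_mul => //; apply: isometry_tens => //; exact: isometry1.
have p2 : aux_pre t W by split => //; split => //; exists g2.
have h1i : isom h^T.
  have T : (adj (h^T))^T = adj h by rewrite /adj trmxK map_trmx.
  by rewrite /Defs.isometry; apply: trmx_inj; rewrite trmx_mul T trmxK trmx1 hh.
have p1 : aux_pre s W.
  split => //; split => //; exists h^T; split => //.
  apply: unvec_inj; rewrite !unvec_mul trmxK Eh /g2 tr_col_mx trmx1 trmx0.
  by rewrite mul_mx_row mulmx1 mulmx0.
apply: (@rst_trans _ _ s W t); [exact: rst_step | apply: rst_sym; exact: rst_step].
Qed.

Lemma ev_adj n (a b : 'I_n) : ev a *m adj (ev b) = delta_mx a b.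
Proof. by rewrite /ev adj_delta mul_delta_mx. Qed.

Lemma vec_expand n (a b : 'I_n) (w : C) :
  (ev a + w *: ev b) *m adj (ev a + w *: ev b) =
  delta_mx a a + w^* *: delta_mx a b + w *: delta_mx b a + (w * w^*) *: delta_mx b b.
Proof.
rewrite adjD adjZ mulmxDl !mulmxDr -!scalemxAl -!scalemxAr !ev_adj scalerA.
by rewrite !addrA [w * _]mulrC.
Qed.

Lemma vv_all n m (Phi Psi : 'M[C]_n -> 'M[C]_m) : lin Phi -> lin Psi ->
  (forall v : 'cV[C]_n, isom v -> Phi (v *m adj v) = Psi (v *m adj v)) ->
  forall v : 'cV[C]_n, Phi (v *m adj v) = Psi (v *m adj v).
Proof.
move=> hP hQ E v.
pose q := (adj v *m v) 0 0.
have q0 : 0 <= q by exact: adj_vec_ge0.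
have [qz|qnz] := eqVneq q 0.
  have -> : v = 0.
    apply/matrixP => i j; rewrite [j]ord1 mxE.
    have qs : \sum_l adj v 0 l * v l 0 = 0 by move: qz; rewrite /q mxE.
    have hnn : forall l, xpredT l -> 0 <= adj v 0 l * v l 0.
      by move=> l _; rewrite adjE mulrC mul_conjC_ge0.
    have h := @psumr_eq0P _ _ xpredT (fun l => adj v 0 l * v l 0) hnn qs i isT.
    by apply/eqP; rewrite -mul_conjC_eq0 mulrC -adjE h.
  by rewrite mul0mx !lin0.
pose sq := sqrtC q.
have sq0 : 0 <= sq by rewrite sqrtC_ge0.
have sqr : sq^* = sq by apply: conj_Creal; apply: ger0_real.
have sqnz : sq != 0 by rewrite sqrtC_eq0.
pose u := sq^-1 *: v.
have hu : isom u.
  rewrite /Defs.isometry /u adjZ -scalemxAl -scalemxAr scalerA; apply/matrixP => i j.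
  rewrite !ord1 [LHS]mxE -/q fmorphV /= sqr [RHS]mxE eqxx mulr1n.
  have : sq ^+ 2 = q by rewrite sqrtCK.
  by move=> sq2; rewrite -sq2 expr2; field.
have -> : v *m adj v = (sq * sq) *: (u *m adj u).
  rewrite /u adjZ -scalemxAl -scalemxAr !scalerA fmorphV /= sqr.
  have -> : sq * sq / sq / sq = 1 by field.
  by rewrite scale1r.
by rewrite !linZ // E.
Qed.

Lemma span_vv n m (Phi Psi : 'M[C]_n -> 'M[C]_m) : lin Phi -> lin Psi ->
  (forall v : 'cV[C]_n, isom v -> Phi (v *m adj v) = Psi (v *m adj v)) ->
  forall X, Phi X = Psi X.
Proof.
move=> hP hQ E0; have E := vv_all hP hQ E0.
pose D X := Phi X - Psi X.
have hD : lin D by move=> c X Y; rewrite /D hP hQ scalerBr opprD addrACA.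
have Dv (v : 'cV[C]_n) : D (v *m adj v) = 0 by rewrite /D /= E subrr.
have Dd a : D (delta_mx a a) = 0 by rewrite -ev_adj Dv.
apply: lin_ext => // a b; apply/eqP; rewrite -subr_eq0; apply/eqP.
have h1 := Dv (ev a + 1 *: ev b).
have h2 := Dv (ev a + 'i *: ev b).
rewrite vec_expand !(linD hD) !(linZ hD) !Dd !scaler0 !addr0 add0r in h1.
rewrite vec_expand !(linD hD) !(linZ hD) !Dd !scaler0 !addr0 add0r in h2.
rewrite rmorph1 !scale1r in h1; rewrite conjCi in h2.
have ey : D (delta_mx b a) = - D (delta_mx a b).
  by apply/eqP; rewrite -addr_eq0 addrC h1.
rewrite ey scalerN scaleNr -opprD in h2; move/eqP: h2; rewrite oppr_eq0 -scalerDl.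
rewrite scaler_eq0 => /orP[|/eqP //].
by rewrite -mulr2n mulrn_eq0 /= (negbTE (neq0Ci _)).
Qed.

Lemma ext_chan n m (f g : auxhom n m) : ext_eq f g -> forall X, chan f X = chan g X.
Proof.
move=> he; apply: span_vv; [exact: lin_chan | exact: lin_chan |] => v hv.
have := sim_chan (he (aux_emb v) (valid_aux_emb hv)) 1%:M.
by rewrite !chan_comp chan_emb /conj_ch mulmx1.
Qed.

Lemma chan_ext n m (f g : auxhom n m) : aux_valid f -> aux_valid g ->
  (forall X, chan f X = chan g X) -> ext_eq f g.
Proof.
move=> vf vg E a va; apply: purif_state; try exact: valid_aux_comp.
by rewrite !chan_comp E.
Qed.

Lemma cptp_id n : cptp (fun X : 'M[C]_n => X).
Proof.
apply: (cptp_ext (Psi := chan (aux_id n))); first by move=> X; rewrite chan_id.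
exact: cptp_chan (valid_aux_id n).
Qed.

Lemma cptp_conj n m (U : 'M[C]_(m, n)) : isom U -> cptp (conj_ch U).
Proof.
move=> hU; apply: (cptp_ext (Psi := chan (aux_emb U))); first by move=> X; rewrite chan_emb.
exact: cptp_chan (valid_aux_emb hU).
Qed.

Lemma cptp_lin n m (Phi : 'M[C]_n -> 'M[C]_m) : cptp Phi -> lin Phi.
Proof. by case. Qed.

Lemma cptp_comp n m k (Phi : 'M[C]_n -> 'M[C]_m) (Psi : 'M[C]_m -> 'M[C]_k) :
  cptp Phi -> cptp Psi -> cptp (fun X => Psi (Phi X)).
Proof.
move=> /stinespring [f [vf Ef]] /stinespring [g [vg Eg]].
apply: (cptp_ext (Psi := chan (aux_comp g f))); first by move=> X; rewrite chan_comp Ef Eg.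
exact: cptp_chan (valid_aux_comp vg vf).
Qed.

Lemma cp_tens_ext n n' m m' (f f' : 'M[C]_n -> 'M[C]_m) (g g' : 'M[C]_n' -> 'M[C]_m') :
  (forall X, f X = f' X) -> (forall X, g X = g' X) -> forall X, cp_tens f g X = cp_tens f' g' X.
Proof.
move=> Ef Eg X.
have -> : f = f' by apply: functional_extensionality.
by have -> : g = g' by apply: functional_extensionality.
Qed.

Lemma cptp_tens n n' m m' (Phi : 'M[C]_n -> 'M[C]_m) (Psi : 'M[C]_n' -> 'M[C]_m') :
  cptp Phi -> cptp Psi -> cptp (cp_tens Phi Psi).
Proof.
move=> /stinespring [f [vf Ef]] /stinespring [g [vg Eg]].
apply: (cptp_ext (Psi := chan (aux_tens f g))).
  by move=> X; rewrite chan_tens; apply: cp_tens_ext => Y; rewrite ?Ef ?Eg.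
exact: cptp_chan (valid_aux_tens vf vg).
Qed.

Lemma isom_alpha a b c : isom (alpha_mx a b c). Proof. exact: isometry_cast. Qed.
Lemma isom_alpha_inv a b c : isom (alpha_inv_mx a b c). Proof. exact: isometry_cast. Qed.
Lemma isom_lambda a : isom (lambda_mx a). Proof. exact: isometry_cast. Qed.
Lemma isom_lambda_inv a : isom (lambda_inv_mx a). Proof. exact: isometry_cast. Qed.
Lemma isom_rho a : isom (rho_mx a). Proof. exact: isometry_cast. Qed.
Lemma isom_rho_inv a : isom (rho_inv_mx a). Proof. exact: isometry_cast. Qed.

Lemma conj_cast_inv n m (e : n = m) (e' : m = n) (X : 'M[C]_n) :
  conj_ch (pmx (cast_ord e')) (conj_ch (pmx (cast_ord e)) X) = X.
Proof.
rewrite !conj_cast; apply/matrixP => i j; rewrite !castmxE.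
by congr (X _ _); apply: val_inj.
Qed.

Lemma CPTP_moncat : is_moncat CPTPcat.
Proof.
constructor => /=.
{ by []. }
{ by move=> a b f g _ _ E X; rewrite E. }
{ by move=> a b f g h _ _ _ E1 E2 X; rewrite E1 E2. }
{ exact: cptp_id. }
{ by move=> a b c g f vg vf; exact: cptp_comp. }
{ by move=> a b a' b' f g vf vg; exact: cptp_tens. }
{ by move=> a b c g g' f f' _ _ _ _ Eg Ef X; rewrite Ef Eg. }
{ by move=> a b a' b' f f' g g' _ _ _ _ Ef Eg; exact: cp_tens_ext. }
{ by []. }
{ by []. }
{ by []. }
{ by move=> a b X; rewrite cp_tens_id. }
{ move=> a b c a' b' c' f g f' g' vf vg vf' vg'.
  apply: lin_ext2; first exact: lin_cp_tens.
    by apply: lin_comp; exact: lin_cp_tens.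
  move=> i j k l.
  rewrite cp_tens_tens; last by apply: lin_comp; exact: cptp_lin.
    by rewrite cp_tens_tens ?cp_tens_tens //; exact: cptp_lin.
  by apply: lin_comp; exact: cptp_lin. }
{ move=> a b c; split; rewrite /= ?cptp_conj ?isom_alpha ?isom_alpha_inv //.
  - exact: cptp_conj (isom_alpha _ _ _).
  - exact: cptp_conj (isom_alpha_inv _ _ _).
  - by move=> X; rewrite conj_cast_inv.
  - by move=> X; rewrite conj_cast_inv. }
{ move=> a; split.
  - exact: cptp_conj (isom_lambda _).
  - exact: cptp_conj (isom_lambda_inv _).
  - by move=> X; rewrite /= conj_cast_inv.
  - by move=> X; rewrite /= conj_cast_inv. }
{ move=> a; split.
  - exact: cptp_conj (isom_rho _).
  - exact: cptp_conj (isom_rho_inv _).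
  - by move=> X; rewrite /= conj_cast_inv.
  - by move=> X; rewrite /= conj_cast_inv. }
{ move=> a b c a' b' c' f g h vf vg vh.
  apply: lin_ext3.
  - by apply: lin_comp; [exact: lin_cp_tens | exact: lin_conj].
  - by apply: lin_comp; [exact: lin_conj | exact: lin_cp_tens].
  move=> i j k l p q /=.
  rewrite [in LHS]cp_tens_tens; [|exact: lin_cp_tens|exact: cptp_lin].
  rewrite [in LHS]cp_tens_tens; [|exact: cptp_lin|exact: cptp_lin].
  rewrite !conj_alpha_tens.
  rewrite cp_tens_tens; [|exact: cptp_lin|exact: lin_cp_tens].
  by rewrite cp_tens_tens; [|exact: cptp_lin|exact: cptp_lin]. }
{ move=> a b f vf; apply: lin_ext2.
  - by apply: lin_comp; [exact: lin_cp_tens | exact: lin_conj].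
  - by apply: lin_comp; [exact: lin_conj | exact: cptp_lin].
  move=> i j k l /=.
  rewrite cp_tens_tens; [|exact: lin_id|exact: cptp_lin].
  by rewrite !conj_lambda_tens (linZ (cptp_lin vf)). }
{ move=> a b f vf; apply: lin_ext2.
  - by apply: lin_comp; [exact: lin_cp_tens | exact: lin_conj].
  - by apply: lin_comp; [exact: lin_conj | exact: cptp_lin].
  move=> i j k l /=.
  rewrite cp_tens_tens; [|exact: cptp_lin|exact: lin_id].
  by rewrite !conj_rho_tens (linZ (cptp_lin vf)). }
{ move=> a b c d; apply: lin_ext4.
  - apply: lin_comp; last exact: lin_cp_tens.
    by apply: lin_comp; [exact: lin_cp_tens | exact: lin_conj].
  - by apply: lin_comp; exact: lin_conj.
  move=> i j k l p q u v /=.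
  rewrite cp_tens_tens; [|exact: lin_conj|exact: lin_id].
  rewrite !conj_alpha_tens.
  by rewrite cp_tens_tens; [|exact: lin_id|exact: lin_conj]; rewrite conj_alpha_tens. }
{ move=> a b; apply: lin_ext3.
  - by apply: lin_comp; [exact: lin_conj | exact: lin_cp_tens].
  - exact: lin_cp_tens.
  move=> i j k l p q /=.
  rewrite conj_alpha_tens.
  rewrite cp_tens_tens; [|exact: lin_id|exact: lin_conj].
  rewrite cp_tens_tens; [|exact: lin_conj|exact: lin_id].
  by rewrite conj_lambda_tens conj_rho_tens tensmxZl tensmxZr. }
Qed.

Lemma chan_idF n : chan (aux_id n) = (fun X => X).
Proof. by apply: functional_extensionality => X; rewrite chan_id. Qed.
Lemma chan_compF n m k (g : auxhom m k) (f : auxhom n m) :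
  chan (aux_comp g f) = (fun X => chan g (chan f X)).
Proof. by apply: functional_extensionality => X; rewrite chan_comp. Qed.
Lemma chan_tensF n n' m m' (f : auxhom n m) (f' : auxhom n' m') :
  chan (aux_tens f f') = cp_tens (chan f) (chan f').
Proof. by apply: functional_extensionality => X; rewrite chan_tens. Qed.
Lemma chan_embF n m (U : 'M[C]_(m, n)) : chan (aux_emb U) = conj_ch U.
Proof. by apply: functional_extensionality => X; rewrite chan_emb. Qed.
Lemma ext_chanF n m (f g : auxhom n m) : ext_eq f g -> chan f = chan g.
Proof. by move=> h; apply: functional_extensionality; exact: ext_chan. Qed.

Ltac vld := repeat (first [ apply: valid_aux_comp | apply: valid_aux_tens
  | apply: valid_aux_id | (apply: valid_aux_emb; exact: isometry_cast) | assumption ]).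

Ltac chE := repeat (first [rewrite chan_compF | rewrite chan_tensF | rewrite chan_embF | rewrite chan_idF]).

Lemma Ext_moncat : is_moncat ExtAuxIsometry.
Proof.
have CM := CPTP_moncat.
constructor => /=.
{ by move=> a b f _ x _; exact: rst_refl. }
{ by move=> a b f g _ _ h x vx; apply: rst_sym; exact: h. }
{ by move=> a b f g h _ _ _ h1 h2 x vx; exact: (rst_trans _ _ _ _ _ (h1 x vx) (h2 x vx)). }
{ exact: valid_aux_id. }
{ by move=> a b c g f vg vf; exact: valid_aux_comp. }
{ by move=> a b a' b' f g vf vg; exact: valid_aux_tens. }
{ move=> a b c g g' f f' vg vg' vf vf' Eg Ef; apply: chan_ext; vld.
  by move=> X; chE; rewrite (ext_chanF Ef) (ext_chanF Eg). }
{ move=> a b a' b' f f' g g' vf vf' vg vg' Ef Eg; apply: chan_ext; vld.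
  by move=> X; chE; rewrite (ext_chanF Ef) (ext_chanF Eg). }
{ by move=> a b c d h g f vh vg vf; apply: chan_ext; vld; move=> X; chE. }
{ by move=> a b f vf; apply: chan_ext; vld; move=> X; chE. }
{ by move=> a b f vf; apply: chan_ext; vld; move=> X; chE. }
{ by move=> a b; apply: chan_ext; vld; move=> X; chE; rewrite cp_tens_id. }
{ move=> a b c a' b' c' f g f' g' vf vg vf' vg'; apply: chan_ext; vld.
  move=> X; chE.
  exact: (thom_comp CM (cptp_chan vf) (cptp_chan vg) (cptp_chan vf') (cptp_chan vg') X). }
{ by move=> a b c; split; vld; apply: chan_ext; vld; move=> X; chE; rewrite conj_cast_inv. }
{ by move=> a; split; vld; apply: chan_ext; vld; move=> X; chE; rewrite conj_cast_inv. }
{ by move=> a; split; vld; apply: chan_ext; vld; move=> X; chE; rewrite conj_cast_inv. }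
{ move=> a b c a' b' c' f g h vf vg vh; apply: chan_ext; vld; move=> X; chE.
  exact: (assoc_nat CM (cptp_chan vf) (cptp_chan vg) (cptp_chan vh) X). }
{ move=> a b f vf; apply: chan_ext; vld; move=> X; chE.
  exact: (lunit_nat CM (cptp_chan vf) X). }
{ move=> a b f vf; apply: chan_ext; vld; move=> X; chE.
  exact: (runit_nat CM (cptp_chan vf) X). }
{ move=> a b c d; apply: chan_ext; vld; move=> X; chE.
  exact: (pentagon CM a b c d X). }
{ move=> a b; apply: chan_ext; vld; move=> X; chE.
  exact: (triangle CM a b X). }
Qed.

Definition Fchan : MonFun ExtAuxIsometry CPTPcat :=
  @Build_MonFun ExtAuxIsometry CPTPcat (fun n => n)
    (fun a b (f : auxhom a b) => chan f)
    (fun X => X) (fun X => X) (fun a b X => X) (fun a b X => X).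

Lemma inv_id n : @inverse_pair CPTPcat n n (fun X => X) (fun X => X).
Proof. by split => //; exact: cptp_id. Qed.

Theorem proposition5p1 :
  is_moncat ExtAuxIsometry /\ is_moncat CPTPcat /\
  exists F : MonFun ExtAuxIsometry CPTPcat, monoidal_equivalence F.
Proof.
split; first exact: Ext_moncat.
split; first exact: CPTP_moncat.
exists Fchan; split.
  constructor => /=.
  - by move=> a b f vf; exact: cptp_chan.
  - by move=> a b f g _ _ h; exact: ext_chan.
  - by move=> a X; rewrite chan_id.
  - by move=> a b c g f _ _ X; rewrite chan_comp.
  - exact: inv_id.
  - by move=> a b; exact: inv_id.
  - by move=> a b a' b' f g _ _ X; rewrite chan_tens.
  - by move=> a b c X; rewrite !cp_tens_id chan_emb.
  - by move=> a X; rewrite cp_tens_id chan_emb.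
  - by move=> a X; rewrite cp_tens_id chan_emb.
constructor => /=.
- move=> a b g vg; have [f [vf Ef]] := stinespring vg.
  by exists f.
- by move=> a b f g vf vg E; exact: chan_ext.
- by move=> d; exists d, (fun X => X), (fun X => X); exact: inv_id.
Qed.
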